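(* Let $\mathbf{A}$ be an additive category, let $T: \mathbf{A} \times \mathbf{A} \to \mathcal{A}(\mathbf{A})$ be a bilinear functor with extension $\otimes := \widehat{T}$, and let $\mathrm{Br}_{a,b}: a\otimes b \to b\otimes a$ be a morphism natural in $a,b\in\mathbf{A}$, with extension $\widehat{\mathrm{Br}}$. Then $\widehat{\mathrm{Br}}_{A,B}$ is an isomorphism for all $A,B \in \mathcal{A}(\mathbf{A})$ if and only if $\mathrm{Br}_{a,b}$ is an isomorphism for all $a,b\in\mathbf{A}$.
   Context: The Freyd category $\mathcal{A}(\mathbf{A})$: objects are morphisms $\rho_a: r_a \to a$ of $\mathbf{A}$, written $(a \xleftarrow{\rho_a} r_a)$; morphisms $(a \xleftarrow{\rho_a} r_a) \to (b \xleftarrow{\rho_b} r_b)$ are morphisms $\alpha: a\to b$ of $\mathbf{A}$ with $\alpha\circ\rho_a = \rho_b\circ\omega$ for some $\omega$, modulo those of the form $\rho_b\circ\lambda$; it is additive with cokernels. Objects $a\in\mathbf{A}$ are regarded as $(a\leftarrow 0)$ via the embedding $\mathrm{emb}$. For a multilinear (componentwise additive) $F: \prod_i \mathbf{A}_i \to \mathbf{B}$ into an additive category with cokernels, $\widehat F(A_1,\dots,A_n) = \operatorname{cok}\big(\bigoplus_j F(a_1,\dots,r_{a_j},\dots,a_n) \to F(a_1,\dots,a_n)\big)$ defines the right exact multilinear extension with $\widehat F\circ\mathrm{emb}\cong F$; restriction along $\mathrm{emb}$ is an equivalence between right exact multilinear functors on $\prod_i\mathcal{A}(\mathbf{A}_i)$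 and multilinear functors on $\prod_i\mathbf{A}_i$. $\widehat{\mathrm{Br}}$ is the unique natural transformation $(A,B)\mapsto A\otimes B \Rightarrow (A,B)\mapsto B\otimes A$ whose restriction along $\mathrm{emb}$ is $\mathrm{Br}$. *)

(* Defs.v *)
From HB Require Import structures.
From mathcomp Require Import all_boot all_algebra.
Unset Printing Implicit Defensive.
Import GRing.Theory.
Local Open Scope ring_scope.

Record addcat := AddCat {
  obj : Type;
  Mor : obj -> obj -> zmodType;
  comp : forall {a b c : obj}, Mor b c -> Mor a b -> Mor a c;
  idm : forall a : obj, Mor a a;
  compA : forall a b c d (f : Mor c d) (g : Mor b c) (h : Mor a b),
      comp f (comp g h) = comp (comp f g) h;
  comp1m : forall a b (f : Mor a b), comp (idm b) f = f;
  compm1 : forall a b (f : Mor a b), comp f (idm a) = f;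
  compDl : forall a b c (f f' : Mor b c) (g : Mor a b),
      comp (f + f') g = comp f g + comp f' g;
  compDr : forall a b c (f : Mor b c) (g g' : Mor a b),
      comp f (g + g') = comp f g + comp f g';
  zobj : obj;
  zobj_id : idm zobj = 0;
  bp : obj -> obj -> obj;
  bp_inl : forall a b, Mor a (bp a b);
  bp_inr : forall a b, Mor b (bp a b);
  bp_outl : forall a b, Mor (bp a b) a;
  bp_outr : forall a b, Mor (bp a b) b;
  bp_ll : forall a b, comp (bp_outl a b) (bp_inl a b) = idm a;
  bp_rr : forall a b, comp (bp_outr a b) (bp_inr a b) = idm b;
  bp_lr : forall a b, comp (bp_outl a b) (bp_inr a b) = 0;
  bp_rl : forall a b, comp (bp_outr a b) (bp_inl a b) = 0;
  bp_id : forall a b, comp (bp_inl a b) (bp_outl a b)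
                      + comp (bp_inr a b) (bp_outr a b) = idm (bp a b)
}.

Arguments comp {C a b c} : rename.
Arguments idm {C} : rename.
Arguments zobj {C} : rename.
Arguments bp {C} : rename.
Arguments bp_outl {C a b} : rename.
Arguments bp_outr {C a b} : rename.

Section Freyd.
Variable C : addcat.

Definition copair {a b c : obj C} (f : Mor C a c) (g : Mor C b c)
  : Mor C (bp a b) c := comp f bp_outl + comp g bp_outr.

(* Objects of the Freyd category A(A): morphisms rho : r -> a, (a <- r). *)
Record fobj := FObj { fa : obj C; fr : obj C; frho : Mor C fr fa }.

(* A morphism (a <- r_a) -> (b <- r_b) of A(A) is represented by some
   alpha : a -> b with alpha o rho_a = rho_b o omega for some omega. *)
Definition is_fmor (X Y : fobj) (u : Mor C (fa X) (fa Y)) : Prop :=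
  exists w : Mor C (fr X) (fr Y), comp u (frho X) = comp (frho Y) w.

(* Equality of morphisms of A(A): representatives differ by some rho_b o lambda. *)
Definition fheq (X Y : fobj) (u v : Mor C (fa X) (fa Y)) : Prop :=
  exists l : Mor C (fa X) (fr Y), u - v = comp (frho Y) l.

Definition fiso (X Y : fobj) (u : Mor C (fa X) (fa Y)) : Prop :=
  is_fmor X Y u /\
  exists v : Mor C (fa Y) (fa X),
    [/\ is_fmor Y X v, fheq X X (comp v u) (idm _) & fheq Y Y (comp u v) (idm _)].

Definition emb (a : obj C) : fobj := FObj a zobj 0.

(* Bilinear functors T : A x A -> A(A), with morphisms given by representatives
   and functoriality / bilinearity holding in A(A). *)
Record bifun := BiFun {
  bo : obj C -> obj C -> fobj;
  bh : forall {a a' b b'}, Mor C a a' -> Mor C b b' ->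
         Mor C (fa (bo a b)) (fa (bo a' b'));
  bh_mor : forall a a' b b' (f : Mor C a a') (g : Mor C b b'),
      is_fmor (bo a b) (bo a' b') (bh f g);
  bh_id : forall a b, fheq (bo a b) (bo a b) (bh (idm a) (idm b)) (idm _);
  bh_comp : forall a a' a'' b b' b'' (f : Mor C a' a'') (f' : Mor C a a')
                   (g : Mor C b' b'') (g' : Mor C b b'),
      fheq (bo a b) (bo a'' b'') (bh (comp f f') (comp g g'))
           (comp (bh f g) (bh f' g'));
  bh_addl : forall a a' b b' (f f' : Mor C a a') (g : Mor C b b'),
      fheq (bo a b) (bo a' b') (bh (f + f') g) (bh f g + bh f' g);
  bh_addr : forall a a' b b' (f : Mor C a a') (g g' : Mor C b b'),
      fheq (bo a b) (bo a' b') (bh f (g + g')) (bh f g + bh f g')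
}.

Definition is_nat_braid (T : bifun)
  (Br : forall a b, Mor C (fa (bo T a b)) (fa (bo T b a))) : Prop :=
  (forall a b, is_fmor (bo T a b) (bo T b a) (Br a b)) /\
  (forall a a' b b' (f : Mor C a a') (g : Mor C b b'),
      fheq (bo T a b) (bo T b' a')
           (comp (bh T g f) (Br a b)) (comp (Br a' b') (bh T f g))).

(* The right exact extension  A (x) B := \hat T(A,B)
     = cok( T(r_a,b) (+) T(a,r_b) --[T(rho_a,1), T(1,rho_b)]--> T(a,b) ),
   with the standard cokernel in A(A): the cokernel of a morphism
   phi : (y <- r_y) -> (x <- r_x) is (x <- r_x (+) y) with map [rho_x, phi]. *)
Definition Tens (T : bifun) (A B : fobj) : fobj :=
  let a := fa A in let b := fa B in
  FObj (fa (bo T a b))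
        (bp (fr (bo T a b)) (bp (fa (bo T (fr A) b)) (fa (bo T a (fr B)))))
        (copair (frho (bo T a b))
                (copair (bh T (frho A) (idm b)) (bh T (idm a) (frho B)))).

(* Both cokernels are quotients of
   T(a,b) resp. T(b,a), and \hat Br_{A,B} is the morphism induced by
   Br_{a,b}; this is the unique natural transformation restricting to Br. *)
Definition Brhat (T : bifun)
  (Br : forall a b, Mor C (fa (bo T a b)) (fa (bo T b a))) (A B : fobj)
  : Mor C (fa (Tens T A B)) (fa (Tens T B A)) := Br (fa A) (fa B).

End Freyd.

Arguments fa {C} : rename.
Arguments fr {C} : rename.
Arguments frho {C} : rename.
Arguments bo {C} : rename.
Arguments bh {C} _ {a a' b b'} : rename.
Arguments copair {C a b c} : rename.
Arguments is_fmor {C} : rename.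
Arguments fheq {C} : rename.
Arguments fiso {C} : rename.
Arguments emb {C} : rename.
Arguments is_nat_braid {C} : rename.
Arguments Tens {C} : rename.
Arguments Brhat {C} : rename.

(* Main.v *)
Require Import Defs.
From mathcomp Require Import all_boot all_algebra.
Import GRing.Theory.
Local Open Scope ring_scope.
Local Notation comp := Defs.comp.
Local Notation compA := Defs.compA.
Set Warnings "-notation-overridden,-ambiguous-paths".


Section Aux.
Context {C : addcat}.

Lemma comp0l a b c (g : Mor C a b) : comp (0 : Mor C b c) g = 0.
Proof. by apply: (@addrI _ (comp 0 g)); rewrite -compDl !addr0. Qed.

Lemma comp0r a b c (f : Mor C b c) : comp f (0 : Mor C a b) = 0.
Proof. by apply: (@addrI _ (comp f 0)); rewrite -compDr !addr0. Qed.

Lemma compNl a b c (f : Mor C b c) (g : Mor C a b) : comp (- f) g = - comp f g.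
Proof. by apply: (@addrI _ (comp f g)); rewrite -compDl !subrr comp0l. Qed.

Lemma compNr a b c (f : Mor C b c) (g : Mor C a b) : comp f (- g) = - comp f g.
Proof. by apply: (@addrI _ (comp f g)); rewrite -compDr !subrr comp0r. Qed.

Lemma compBl a b c (f f' : Mor C b c) (g : Mor C a b) :
  comp (f - f') g = comp f g - comp f' g.
Proof. by rewrite compDl compNl. Qed.

Lemma compBr a b c (f : Mor C b c) (g g' : Mor C a b) :
  comp f (g - g') = comp f g - comp f g'.
Proof. by rewrite compDr compNr. Qed.

Lemma copair_inl a b c (f : Mor C a c) (g : Mor C b c) :
  comp (copair f g) (bp_inl C a b) = f.
Proof. by rewrite /copair compDl -!compA bp_ll bp_rl compm1 comp0r addr0. Qed.

Lemma copair_inr a b c (f : Mor C a c) (g : Mor C b c) :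
  comp (copair f g) (bp_inr C a b) = g.
Proof. by rewrite /copair compDl -!compA bp_lr bp_rr compm1 comp0r add0r. Qed.

Lemma comp_copair a b c d (h : Mor C c d) (f : Mor C a c) (g : Mor C b c) :
  comp h (copair f g) = copair (comp h f) (comp h g).
Proof. by rewrite /copair compDr !compA. Qed.

Definition inim (Y : fobj C) {z} (h : Mor C z (fa Y)) : Prop :=
  exists w : Mor C z (fr Y), h = comp (frho Y) w.

Lemma inim0 Y z : inim Y (0 : Mor C z (fa Y)).
Proof. by exists 0; rewrite comp0r. Qed.

Lemma inimD Y z (h h' : Mor C z (fa Y)) : inim Y h -> inim Y h' -> inim Y (h + h').
Proof. by move=> [w ->] [w' ->]; exists (w + w'); rewrite compDr. Qed.

Lemma inimN Y z (h : Mor C z (fa Y)) : inim Y h -> inim Y (- h).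
Proof. by move=> [w ->]; exists (- w); rewrite compNr. Qed.

Lemma inimB Y z (h h' : Mor C z (fa Y)) : inim Y h -> inim Y h' -> inim Y (h - h').
Proof. by move=> H1 H2; apply: inimD => //; apply: inimN. Qed.

Lemma inim_compr Y z z' (h : Mor C z (fa Y)) (k : Mor C z' z) :
  inim Y h -> inim Y (comp h k).
Proof. by move=> [w ->]; exists (comp w k); rewrite compA. Qed.

Lemma inim_rho Y : inim Y (frho Y).
Proof. by exists (idm _); rewrite compm1. Qed.

Lemma inim_copair Y a b (f : Mor C a (fa Y)) (g : Mor C b (fa Y)) :
  inim Y f -> inim Y g -> inim Y (copair f g).
Proof. by move=> H1 H2; apply: inimD; apply: inim_compr. Qed.

Lemma inim_fmor X Y (u : Mor C (fa X) (fa Y)) z (h : Mor C z (fa X)) :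
  is_fmor X Y u -> inim X h -> inim Y (comp u h).
Proof.
move=> [w hw] [w' ->]; exists (comp w w').
by rewrite compA hw -compA.
Qed.

Lemma inim_sub (Z : fobj C) r (rho : Mor C r (fa Z)) z (h : Mor C z (fa Z)) :
  inim Z rho -> inim (FObj _ (fa Z) r rho) h -> inim Z h.
Proof. by move=> H [w ->]; apply: inim_compr. Qed.

Lemma fm_tr (Z W : fobj C) rZ (rhoZ : Mor C rZ (fa Z)) rW (rhoW : Mor C rW (fa W)) f :
  inim (FObj _ (fa Z) rZ rhoZ) (frho Z) -> inim W rhoW ->
  is_fmor (FObj _ (fa Z) rZ rhoZ) (FObj _ (fa W) rW rhoW) f -> is_fmor Z W f.
Proof.
move=> [w' hw'] hW [w hw].
apply: (@inim_sub W rW rhoW) => //.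
exists (comp w w'); rewrite /= in hw hw'.
by rewrite /= hw' compA hw -compA.
Qed.

Lemma fiso_tr X Y rX (rhoX : Mor C rX (fa X)) rY (rhoY : Mor C rY (fa Y)) u :
  inim (FObj _ (fa X) rX rhoX) (frho X) -> inim X rhoX ->
  inim (FObj _ (fa Y) rY rhoY) (frho Y) -> inim Y rhoY ->
  fiso (FObj _ (fa X) rX rhoX) (FObj _ (fa Y) rY rhoY) u -> fiso X Y u.
Proof.
move=> hX hX' hY hY' [mu [v [mv e1 e2]]].
split; first (apply: fm_tr hX hY' _; exact mu).
exists v; split; first (apply: fm_tr hY hX' _; exact mv).
- apply: inim_sub hX' _; exact e1.
- apply: inim_sub hY' _; exact e2.
Qed.

Lemma inim_inv (P Q Y : fobj C) (x : Mor C (fa P) (fa Y)) (u1 : Mor C (fa Q) (fa P)) :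
  fiso Q P u1 -> inim Y (comp x u1) -> inim Y (comp x (frho P)) -> inim Y x.
Proof.
move=> [_ [v1 [_ _ [l e]]]] h1 h2.
have -> : x = comp (comp x u1) v1 - comp (comp x (frho P)) l.
  by rewrite -!compA -e compBr compm1 opprB addrC subrK.
by apply: inimB; apply: inim_compr.
Qed.

End Aux.

Arguments inimD {C Y z h h'}.
Arguments inimN {C Y z h}.
Arguments inimB {C Y z h h'}.
Arguments inim_compr {C Y z z' h k}.
Arguments inim_copair {C Y a b f g}.
Arguments inim_fmor {C X Y u z h}.
Arguments inim_sub {C Z r rho z h}.
Arguments inim_inv {C P Q Y x u1}.

Section Main.
Variable C : addcat.
Variable T : bifun C.
Variable Br : forall a b : obj C, Mor C (fa (bo T a b)) (fa (bo T b a)).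

Lemma inim_swap (Y : fobj C) z (X Z : Mor C z (fa Y)) :
  inim Y X -> inim Y (X - Z) -> inim Y Z.
Proof.
move=> h1 h2; have -> : Z = X - (X - Z) by rewrite opprB addrC subrK.
exact: inimB.
Qed.

Lemma bh0l (a a' b b' : obj C) (g : Mor C b b') :
  inim (bo T a' b') (bh T (0 : Mor C a a') g).
Proof.
have H := @bh_addl _ T a a' b b' 0 0 g.
rewrite addr0 in H.
have H' : inim (bo T a' b') (bh T (0 : Mor C a a') g - (bh T 0 g + bh T 0 g)) by exact: H.
rewrite opprD addrA subrr add0r in H'.
by have := inimN H'; rewrite opprK.
Qed.

Lemma bh0r (a a' b b' : obj C) (f : Mor C a a') :
  inim (bo T a' b') (bh T f (0 : Mor C b b')).
Proof.
have H := @bh_addr _ T a a' b b' f 0 0.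
rewrite addr0 in H.
have H' : inim (bo T a' b') (bh T f (0 : Mor C b b') - (bh T f 0 + bh T f 0)) by exact: H.
rewrite opprD addrA subrr add0r in H'.
by have := inimN H'; rewrite opprK.
Qed.

Lemma L_up (A B : fobj C) z (h : Mor C z (fa (bo T (fa A) (fa B)))) :
  inim (bo T (fa A) (fa B)) h -> inim (Tens T A B) h.
Proof.
case=> w ->; exists (comp (bp_inl _ _ _) w).
by rewrite /Tens /= compA copair_inl.
Qed.

Lemma L_genl (A B : fobj C) : inim (Tens T A B) (bh T (frho A) (idm (fa B))).
Proof.
exists (comp (bp_inr _ _ _) (bp_inl _ _ _)).
by rewrite /Tens /= compA copair_inr copair_inl.
Qed.

Lemma L_genr (A B : fobj C) : inim (Tens T A B) (bh T (idm (fa A)) (frho B)).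
Proof.
exists (comp (bp_inr _ _ _) (bp_inr _ _ _)).
by rewrite /Tens /= compA copair_inr copair_inr.
Qed.

Lemma Tens_fmor (A B Y : fobj C) (u : Mor C (fa (bo T (fa A) (fa B))) (fa Y)) :
  inim Y (comp u (frho (bo T (fa A) (fa B)))) ->
  inim Y (comp u (bh T (frho A) (idm (fa B)))) ->
  inim Y (comp u (bh T (idm (fa A)) (frho B))) -> is_fmor (Tens T A B) Y u.
Proof.
move=> h1 h2 h3.
suff : inim Y (comp u (frho (Tens T A B))) by [].
rewrite /Tens /= !comp_copair.
by apply: inim_copair => //; apply: inim_copair.
Qed.

Lemma vgen (A B : fobj C) (v : Mor C (fa (bo T (fa B) (fa A))) (fa (bo T (fa A) (fa B))))
  (P Q : fobj C) (u1 : Mor C (fa Q) (fa P)) (X1 : Mor C (fa P) (fa (bo T (fa B) (fa A))))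
  (g : Mor C (fa Q) (fa (bo T (fa A) (fa B)))) :
  is_fmor (bo T (fa B) (fa A)) (bo T (fa A) (fa B)) v ->
  fheq (bo T (fa A) (fa B)) (bo T (fa A) (fa B)) (comp v (Br (fa A) (fa B))) (idm _) ->
  fiso Q P u1 -> is_fmor P (bo T (fa B) (fa A)) X1 ->
  inim (bo T (fa B) (fa A)) (comp X1 u1 - comp (Br (fa A) (fa B)) g) ->
  inim (Tens T A B) g -> inim (Tens T A B) (comp v X1).
Proof.
move=> mv e1 iso mX N hg.
apply: (inim_inv iso).
  have -> : comp (comp v X1) u1 =
     comp v (comp X1 u1 - comp (Br (fa A) (fa B)) g)
     + comp (comp v (Br (fa A) (fa B)) - idm _) g + g.
    by rewrite compBr compBl comp1m !compA addrA !subrK.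
  apply: inimD; last exact: hg.
  apply: inimD; apply: L_up; first exact: (inim_fmor mv N).
  by apply: inim_compr; exact: e1.
rewrite -compA; apply: L_up; apply: (inim_fmor mv); exact: mX.
Qed.

End Main.

Arguments L_up {C T A B z h}.
Arguments inim_swap {C Y z X Z}.
Arguments vgen {C T Br A B v P Q u1 X1 g}.
Arguments Tens_fmor {C T A B Y u}.

Theorem lemma3p18 (C : addcat) (T : bifun C)
  (Br : forall a b : obj C, Mor C (fa (bo T a b)) (fa (bo T b a)))
  (HBr : is_nat_braid T Br) :
  (forall A B : fobj C, fiso (Tens T A B) (Tens T B A) (Brhat T Br A B)) <->
  (forall a b : obj C, fiso (bo T a b) (bo T b a) (Br a b)).
Proof.
have [_ Nat] := HBr.
split.
- move=> H a b.
  have HT := H (emb a) (emb b); rewrite /Tens /Brhat /= in HT.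
  have gen : forall x y : obj C, inim (bo T x y)
     (copair (frho (bo T x y)) (copair (bh T (0 : Mor C zobj x) (idm y))
                                       (bh T (idm x) (0 : Mor C zobj y)))).
    move=> x y; apply: inim_copair; first exact: inim_rho.
    by apply: inim_copair; [exact: bh0l | exact: bh0r].
  have inl_gen : forall x y : obj C,
     inim (FObj _ (fa (bo T x y)) _ (copair (frho (bo T x y))
        (copair (bh T (0 : Mor C zobj x) (idm y)) (bh T (idm x) (0 : Mor C zobj y)))))
        (frho (bo T x y)).
    by move=> x y; exists (bp_inl _ _ _); rewrite /= copair_inl.
  move: HT; apply: fiso_tr.
  - exact: inl_gen.
  - exact: gen.
  - exact: inl_gen.
  - exact: gen.
- move=> H A B; rewrite /Brhat.
  have [mBr [v [mv e1 e2]]] := H (fa A) (fa B).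
  split.
  + apply: Tens_fmor.
    * by apply: L_up; exact: mBr.
    * have N := Nat (fr A) (fa A) (fa B) (fa B) (frho A) (idm (fa B)).
      apply: (inim_swap _ (L_up N)).
      by apply: inim_compr; exact: L_genr.
    * have N := Nat (fa A) (fa A) (fr B) (fa B) (idm (fa A)) (frho B).
      apply: (inim_swap _ (L_up N)).
      by apply: inim_compr; exact: L_genl.
  + exists v; split.
    * apply: Tens_fmor.
      - by apply: L_up; exact: mv.
      - apply: (vgen mv e1 (H (fa A) (fr B))).
          exact: bh_mor.
          exact: (Nat (fa A) (fa A) (fr B) (fa B) (idm (fa A)) (frho B)).
        exact: L_genr.
      - apply: (vgen mv e1 (H (fr A) (fa B))).
          exact: bh_mor.
          exact: (Nat (fr A) (fa A) (fa B) (fa B) (frho A) (idm (fa B))).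
        exact: L_genl.
    * by apply: L_up; exact: e1.
    * by apply: L_up; exact: e2.
Qed.
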